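(* There exist, for all $n,i\in\mathbb Z$, non-commutative Laurent polynomials $P_{n,i}$ in two variables $X,Y$ (finite sums, with non-negative integer coefficients, of finite words in $X^{\pm1},Y^{\pm1}$) such that the following holds: for every unital algebra $\mathcal A$ (unit $\mathbf 1$) and every family $(\mathbf R_n)_{n\in\mathbb Z}$ of invertible elements of $\mathcal A$ satisfying the non-commutative $A_1$ $Q$-system $$\mathbf R_{n+1}\mathbf R_n^{-1}\mathbf R_{n-1}=\mathbf R_n+\mathbf R_n^{-1}\qquad(n\in\mathbb Z),$$ one has $\mathbf R_n=P_{n,i}(\mathbf R_i,\mathbf R_{i+1})$ for all $n,i\in\mathbb Z$. In words: the solutions are positive (non-negative integer coefficient) Laurent polynomials of any admissible initial data $\mathbf x_i=(\mathbf R_i,\mathbf R_{i+1})$. *)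

(* Defs.v *)
From HB Require Import structures.
From mathcomp Require Import all_boot all_order all_algebra.
Set Implicit Arguments. Unset Strict Implicit. Unset Printing Implicit Defensive.
Import GRing.Theory.
Local Open Scope ring_scope.

Inductive letter := LX | LXinv | LY | LYinv.

Definition word := seq letter.

(* A non-commutative Laurent polynomial in X, Y with non-negative integer
   coefficients, represented as a finite list of words (a coefficient c of a
   word is represented by c repetitions of that word). *)
Definition nclpoly := seq word.

Definition eval_letter (A : unitRingType) (x y : A) (l : letter) : A :=
  match l with
  | LX => x | LXinv => x^-1 | LY => y | LYinv => y^-1
  end.

Definition eval_word (A : unitRingType) (x y : A) (w : word) : A :=
  \prod_(l <- w) eval_letter x y l.

Definition eval_nclpoly (A : unitRingType) (x y : A) (P : nclpoly) : A :=
  \sum_(w <- P) eval_word x y w.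

Definition QsystemA1 (A : unitRingType) (R : int -> A) : Prop :=
  forall n : int, R (n + 1) * (R n)^-1 * R (n - 1) = R n + (R n)^-1.

(* Main.v *)
Require Import Defs.
From HB Require Import structures.
From mathcomp Require Import all_boot all_order all_algebra.
Import GRing.Theory.
Local Open Scope ring_scope.

Section Alg.
Variable A : unitRingType.
Lemma comm_s (b : A) : b \is a GRing.unit -> (b + b^-1) * b = b * (b + b^-1).
Proof. by move=> ub; rewrite mulrDl mulrDr mulVr // mulrV. Qed.

Lemma consC (a b c : A) : a \is a GRing.unit -> b \is a GRing.unit -> c \is a GRing.unit ->
  c * b^-1 * a = b + b^-1 -> c^-1 * b * c * b^-1 = b^-1 * a * b * a^-1.
Proof.
move=> ua ub uc H.
have hc : c = (b + b^-1) * a^-1 * b by rewrite -H mulrK // mulrVK.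
apply: (mulrI uc); rewrite !mulrA mulrV // mul1r -[c * b^-1 * a]/(c * b^-1 * a) H.
by rewrite {1}hc !mulrA mulrK // -comm_s.
Qed.

Lemma consK (a p q r : A) : a \is a GRing.unit -> p \is a GRing.unit -> q \is a GRing.unit ->
  r * q^-1 * p = q + q^-1 -> q * p^-1 * a = p + p^-1 ->
  r * q^-1 + (q^-1 * p * q * p^-1) * p * q^-1 = q * p^-1 + (q^-1 * p * q * p^-1) * a * p^-1.
Proof.
move=> ua up uq H1 H2.
have hr : r * q^-1 = (q + q^-1) * p^-1 by rewrite -H1 mulrK.
have ha : a = p * q^-1 * (p + p^-1) by rewrite -H2 !mulrA mulrVK // mulrV // mul1r.
have hG : q^-1 * p * q * p^-1 * p * q^-1 = q^-1 * p by rewrite mulrVK // mulrK.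
rewrite hr hG ha !mulrA hG mulrDr !mulrDl mulrK //.
by rewrite mulrK // [q^-1 * p + _]addrC addrA.
Qed.
End Alg.

Definition pmul (p q : nclpoly) : nclpoly := [seq u ++ v | u <- p, v <- q].

Section Eval.
Variables (A : unitRingType) (x y : A).
Lemma eval_word_cat u v : eval_word x y (u ++ v) = eval_word x y u * eval_word x y v.
Proof. by rewrite /eval_word big_cat. Qed.
Lemma eval_cat p q : eval_nclpoly x y (p ++ q) = eval_nclpoly x y p + eval_nclpoly x y q.
Proof. by rewrite /eval_nclpoly big_cat. Qed.
Lemma eval_mul p q : eval_nclpoly x y (pmul p q) = eval_nclpoly x y p * eval_nclpoly x y q.
Proof.
elim: p => [|a p IH]; first by rewrite /pmul /eval_nclpoly /= !big_nil mul0r.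
rewrite /pmul /= eval_cat -/(pmul p q) IH.
rewrite [eval_nclpoly x y (a :: p)]/eval_nclpoly big_cons mulrDl -/(eval_nclpoly x y p); congr (_ + _).
rewrite /eval_nclpoly big_map mulr_sumr; apply: eq_bigr => v _.
by rewrite eval_word_cat.
Qed.
End Eval.

Definition Kp : nclpoly := [:: [:: LY; LXinv]; [:: LYinv; LXinv]].
Definition Mp : nclpoly := [:: [:: LYinv; LX; LYinv; LXinv]].
Definition Np : nclpoly := [:: [:: LYinv; LX]].
Definition step (rd : nclpoly * nclpoly) : nclpoly * nclpoly :=
  (pmul Kp rd.1 ++ rd.2, pmul Mp rd.1 ++ pmul Np rd.2).
Definition rd (k : nat) := iter k step ([:: [:: LY]], [::]).
Definition Q (k : nat) : nclpoly :=
  match k with 0 => [:: [:: LX]] | k'.+1 => (rd k').1 end.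

Lemma core (A : unitRingType) (f : nat -> A) :
  (forall k, f k \is a GRing.unit) ->
  (forall k, f k.+2 * (f k.+1)^-1 * f k = f k.+1 + (f k.+1)^-1) ->
  forall k, f k = eval_nclpoly (f 0) (f 1) (Q k).
Proof.
move=> U H.
pose Ci k := (f k.+1)^-1 * f k * f k.+1 * (f k)^-1.
have hC : forall k, Ci k = Ci 0.
  elim=> // k IH; rewrite -IH /Ci; exact: consC.
pose Kn k := f k.+2 * (f k.+1)^-1 + Ci k * f k * (f k.+1)^-1.
have hK : forall k, Kn k = Kn 0.
  elim=> // k IH; rewrite -IH /Kn.
  have -> : Ci k = Ci k.+1 by rewrite (hC k) (hC k.+1).
  exact: consK.
have L : forall k, f k.+2 = Kn 0 * f k.+1 - Ci 0 * f k.
  move=> k; rewrite -(hK k) -(hC k) /Kn mulrDl !mulrVK //.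
  by rewrite addrK.
have hK0 : Kn 0 = (f 1) * (f 0)^-1 + (f 1)^-1 * (f 0)^-1 + (f 1)^-1 * (f 0).
  rewrite /Kn /Ci.
  have -> : f 2 * (f 1)^-1 = ((f 1) + (f 1)^-1) * (f 0)^-1.
  by rewrite -(H 0) (mulrK (U 0)).
  by rewrite mulrDl (mulrVK (U 0)) (mulrK (U 1)).
have eK : eval_nclpoly (f 0) (f 1) Kp = (f 1) * (f 0)^-1 + (f 1)^-1 * (f 0)^-1.
  by rewrite /eval_nclpoly /eval_word !big_cons !big_nil /= !mulr1 addr0.
have eM : eval_nclpoly (f 0) (f 1) Mp = (f 1)^-1 * (f 0) * (f 1)^-1 * (f 0)^-1.
  by rewrite /eval_nclpoly /eval_word !big_cons !big_nil /= !mulr1 addr0 !mulrA.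
have eN : eval_nclpoly (f 0) (f 1) Np = (f 1)^-1 * (f 0).
  by rewrite /eval_nclpoly /eval_word !big_cons !big_nil /= !mulr1 addr0.
have main : forall k, f k.+1 = eval_nclpoly (f 0) (f 1) (rd k).1 /\
                      (f 1)^-1 * (f 0) * f k.+1 - Ci 0 * f k = eval_nclpoly (f 0) (f 1) (rd k).2.
  elim=> [|k [IH1 IH2]].
    split; first by rewrite /rd /= /eval_nclpoly /eval_word !big_cons !big_nil /= mulr1 addr0.
    rewrite /rd /= /eval_nclpoly big_nil /Ci.
    by rewrite -!mulrA mulVr // mulr1 subrr.
  have hf : f k.+2 = ((f 1) * (f 0)^-1 + (f 1)^-1 * (f 0)^-1) * f k.+1 + ((f 1)^-1 * (f 0) * f k.+1 - Ci 0 * f k).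
    by rewrite L hK0 mulrDl addrA.
  rewrite /rd iterS -/(rd k) /step; cbn [fst snd]; rewrite eval_cat (eval_mul _ _ _ Kp) eval_cat (eval_mul _ _ _ Mp) (eval_mul _ _ _ Np) eK eM eN -IH1 -IH2.
  split=> //.
  rewrite hf; set D := (_ - Ci 0 * f k).
  rewrite mulrDr !mulrA mulrDr !mulrA.
  have -> : Ci 0 = (f 1)^-1 * f 0 * f 1 * (f 0)^-1 by [].
  apply/eqP; rewrite subr_eq; apply/eqP.
  by rewrite mulrDl -addrA addrC.
case=> [|k]; first by rewrite /eval_nclpoly /eval_word /= !big_cons !big_nil mulr1 addr0.
by rewrite (proj1 (main k)).
Qed.

Definition swapL (l : letter) : letter :=
  match l with LX => LY | LXinv => LYinv | LY => LX | LYinv => LXinv end.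
Definition rsw (P : nclpoly) : nclpoly := [seq rev (map swapL w) | w <- P].

Lemma eval_conv (A : unitRingType) (a b : A) (P : nclpoly) :
  @eval_nclpoly A^c a b P = eval_nclpoly b a (rsw P).
Proof.
rewrite /eval_nclpoly /rsw big_map.
elim: P => [|w P IH]; first by rewrite !big_nil.
rewrite !big_cons IH; congr (_ + _).
rewrite /eval_word rev_prodr -map_rev big_map; apply: eq_bigr => l _.
by case: l.
Qed.

Definition Pfin (n i : int) : nclpoly :=
  match n - i with Posz k => Q k | Negz k => rsw (Q k.+2) end.

Lemma S1 (m : nat) : (m.+1%:Z) = m%:Z + 1 :> int.
Proof. by rewrite -addn1 PoszD. Qed.

Theorem mainTheorem12 :
  exists P : int -> int -> nclpoly,
    forall (K : fieldType) (A : unitAlgType K) (R : int -> A),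
      (forall n : int, R n \is a GRing.unit) ->
      QsystemA1 R ->
      forall n i : int, R n = eval_nclpoly (R i) (R (i + 1)) (P n i).
Proof.
exists Pfin => K A R hu hq n i.
rewrite /Pfin; case E: (n - i) => [k|k].
- pose f (m : nat) := R (m%:Z + i).
  have fk := @core A f (fun m => hu _).
  have /fk {}fk : forall m : nat, f m.+2 * (f m.+1)^-1 * f m = f m.+1 + (f m.+1)^-1.
    move=> m; rewrite /f.
    have := hq (m%:Z + i + 1); rewrite addrK.
    have -> : m%:Z + i + 1 + 1 = m.+2%:Z + i.
    by rewrite !S1 [RHS]addrAC [m%:Z + 1 + i]addrAC.
    have -> : m%:Z + i + 1 = m.+1%:Z + i by rewrite !S1 addrAC.
    by [].
  have -> : n = k%:Z + i by rewrite -E subrK.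
  by rewrite -/(f k) fk /f add0r addrC.
- pose g (m : nat) : A^c := R (i + 1 - m%:Z).
  have gk := @core (A^c) g (fun m => hu _).
  have /gk {}gk : forall m : nat, g m.+2 * (g m.+1)^-1 * g m = g m.+1 + (g m.+1)^-1.
    move=> m.
    have e0 : i + 1 - m%:Z = i - m%:Z + 1 by rewrite addrAC.
    have e1 : i + 1 - m.+1%:Z = i - m%:Z by rewrite S1 opprD addrA addrAC addrK.
    have e2 : i + 1 - m.+2%:Z = i - m%:Z - 1.
      by rewrite !S1 !opprD !addrA [i + 1 - m%:Z - 1]addrAC addrK.
    have h := hq (i - m%:Z).
    rewrite /g e0 e1 e2.
    change (R (i - m%:Z + 1) * ((R (i - m%:Z))^-1 * R (i - m%:Z - 1)) = R (i - m%:Z) + (R (i - m%:Z))^-1).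
    by rewrite mulrA.
  have -> : n = i + 1 - k.+2%:Z.
    have -> : n = (n - i) + i by rewrite subrK.
    by rewrite E NegzE (S1 k.+1) opprD addrA [RHS]addrAC addrK [LHS]addrC.
  by rewrite -/(g k.+2) gk eval_conv /g subr0 addrK.
Qed.
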